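(* Let $\mathcal A\subset\mathbb R^n$ be compact with diameter $D_{\mathcal A}<\infty$, let $\mathcal X=\mathrm{conv}(\mathcal A)$, let $f$ have $L$-Lipschitz gradient, and let $\eta\in(1,2)$. Run the AC-FW algorithm with the away-step Frank-Wolfe subroutine and a damping sequence satisfying Condition (D), with $L_0>0$. Then the subroutine satisfies parts (i) and (ii) of Condition (S); more precisely, for every $t\ge0$, $$|\mathcal G\cap\mathcal I_\eta\cap[t]|\ge\frac{t+1}{2}-\left\lfloor\log_\eta\!\left(\frac{L}{rL_0}\right)\right\rfloor.$$ If additionally $f$ is convex, then part (iii) of Condition (S) holds with $R=1$.
   Context: $D_{\mathcal A}:=\sup_{x,y\in\mathcal A}\|x-y\|_2$; $f:\mathbb R^n\to\mathbb R$ is differentiable with $\|\nabla f(x)-\nabla f(y)\|_2\le L\|x-y\|_2$. $x^\star$ is an optimal solution of $\min_{x\in\mathcal X}f(x)$. For $x\ne y$, $\ell(x,y):=2|f(y)-f(x)-\nabla f(x)^\top(y-x)|/\|y-x\|_2^2$, $\ell(x,x):=0$. AC-FW algorithm: given $\{r_t\}_{t\ge0}$ and a subroutine, pick $x_{-1}\in\mathcal A$, $x_0\in\arg\min_{v\in\mathcal A}\nabla f(x_{-1})^\top v$, $L_0:=\ell(x_{-1},x_0)$. For $t=0,1,\dots$: $v_t\in\arg\min_{v\in\mathcal A}\nabla f(x_t)^\top v$; the subroutine returns $(d_t,\gamma_t^{\max})$; $\gamma_t:=\min\{\nabla f(x_t)^\top d_t/(L_t\|d_t\|_2^2),\gamma_t^{\max}\}$;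 $\bar x_{t+1}:=x_t-\gamma_td_t$; $L_{t+1}:=\max\{\ell(x_t,\bar x_{t+1}),r_tL_t\}$; $x_{t+1}:=\bar x_{t+1}$ if $f(\bar x_{t+1})<f(x_t)$, else $x_{t+1}:=x_t$. Away-step Frank-Wolfe subroutine: it maintains weights $\alpha_{s,t}\ge0$ ($s\in\mathcal A$), active set $\mathcal S_t:=\{s:\alpha_{s,t}>0\}$, $x_t=\sum_s\alpha_{s,t}s$, initially $\mathcal S_0=\{x_0\}$, $\alpha_{x_0,0}=1$. At iteration $t$: $s_t\in\arg\max_{s\in\mathcal S_t}\nabla f(x_t)^\top s$. If $\nabla f(x_t)^\top(x_t-v_t)\ge\nabla f(x_t)^\top(s_t-x_t)$ (FW step): $d_t:=x_t-v_t$, $\gamma_t^{\max}:=1$; otherwise (away step): $d_t:=s_t-x_t$, $\gamma_t^{\max}:=\alpha_{s_t,t}/(1-\alpha_{s_t,t})$. If $x_{t+1}=x_t$, weights are unchanged; if an FW step is accepted, $\alpha_{s,t+1}:=(1-\gamma_t)\alpha_{s,t}+\gamma_t\mathbf 1\{s=v_t\}$; if an away step is accepted, $\alpha_{s,t+1}:=(1+\gamma_t)\alpha_{s,t}-\gamma_t\mathbf 1\{s=s_t\}$. Then $\mathcal S_{t+1}:=\{s:\alpha_{s,t+1}>0\}$. $[t]:=\{0,\dots,t\}$; $\mathcal I_\eta:=\{t\ge0:L_{t+1}\le\eta L_t\}$; $\mathcal G:=\{t\ge0:\gamma_t^{\max}\ge1\text{ or }\gamma_t<\gamma_t^{\max}\}$.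 Condition (D): $r_t\in(0,1]$ for all $t$ and $r:=\prod_{t\ge0}r_t\in(0,1]$. Condition (S): for all $t\ge0$: (i) $\|d_t\|_2\le D_{\mathcal A}$ and $x_t-\gamma d_t\in\mathcal X$ for all finite $\gamma\in[0,\gamma_t^{\max}]$; (ii) $\mathcal G$ is infinite; (iii) if $f$ is convex, there is $R\ge1$ independent of $t$ with $\nabla f(x_t)^\top d_t\ge(f(x_t)-f(x^\star))/R$. *)

(* Defs.v *)
From HB Require Import structures.
From mathcomp Require Import all_boot all_order all_algebra.
From mathcomp Require Import all_classical all_reals all_analysis.
Set Implicit Arguments. Unset Strict Implicit. Unset Printing Implicit Defensive.
Import Order.TTheory GRing.Theory Num.Theory.
Import numFieldNormedType.Exports.
Local Open Scope classical_set_scope.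
Local Open Scope ring_scope.

Section Defs.
Variables (R : realType) (n : nat).
Local Notation vec := 'rV[R]_n.

Definition dotp (u w : vec) : R := \sum_(i < n) u 0 i * w 0 i.
Definition norm2 (u : vec) : R := Num.sqrt (dotp u u).

Definition diam (A : set vec) : R :=
  sup [set norm2 (x - y) | x in A & y in A].

Definition convhull (A : set vec) : set vec :=
  [set y | exists (k : nat) (p : 'I_k -> vec) (w : 'I_k -> R),
      (forall i, A (p i)) /\ (forall i, 0 <= w i) /\ \sum_(i < k) w i = 1
      /\ y = \sum_(i < k) w i *: p i].

Definition is_gradient (f : vec -> R) (grad : vec -> vec) : Prop :=
  forall x, differentiable f x /\ forall h, 'd f x h = dotp (grad x) h.

Definition convex_fun (f : vec -> R) : Prop :=
  forall x y (l : R), 0 <= l <= 1 ->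
    f (l *: x + (1 - l) *: y) <= l * f x + (1 - l) * f y.

Definition ell (f : vec -> R) (grad : vec -> vec) (x y : vec) : R :=
  if x == y then 0
  else 2 * `|f y - f x - dotp (grad x) (y - x)| / (norm2 (y - x)) ^+ 2.

Definition away_gmax (a : R) : \bar R :=
  if a == 1 then +oo%E else (a / (1 - a))%:E.

(* One full run of AC-FW with the away-step FW subroutine.
   xm1 = x_{-1}; xbar t = \bar x_{t+1}; Lt t = L_t; rr t = r_t;
   alpha t s = alpha_{s,t}; S_t = [set s | 0 < alpha t s]. *)
Definition AC_AFW_run (A : set vec) (f : vec -> R) (grad : vec -> vec)
  (rr : nat -> R) (xm1 : vec) (x v s d xbar : nat -> vec)
  (gmax : nat -> \bar R) (gamma Lt : nat -> R) (alpha : nat -> vec -> R) : Prop :=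
  A xm1 /\
  (A (x 0%N) /\ (forall w, A w -> dotp (grad xm1) (x 0%N) <= dotp (grad xm1) w)) /\
  Lt 0%N = ell f grad xm1 (x 0%N) /\
  alpha 0%N = (fun w => if w == x 0%N then 1 else 0) /\
  forall t : nat,
      (A (v t) /\ (forall w, A w -> dotp (grad (x t)) (v t) <= dotp (grad (x t)) w)) /\
          (0 < alpha t (s t) /\
            (forall w, 0 < alpha t w -> dotp (grad (x t)) w <= dotp (grad (x t)) (s t))) /\
          (if dotp (grad (x t)) (x t - v t) >= dotp (grad (x t)) (s t - x t)
           then d t = x t - v t /\ gmax t = 1%E
           else d t = s t - x t /\ gmax t = away_gmax (alpha t (s t))) /\
          ((gamma t)%:E = Order.min
              ((dotp (grad (x t)) (d t) / (Lt t * (norm2 (d t)) ^+ 2))%:E) (gmax t)) /\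
          xbar t = x t - gamma t *: d t /\
          Lt t.+1 = Num.max (ell f grad (x t) (xbar t)) (rr t * Lt t) /\
          x t.+1 = (if f (xbar t) < f (x t) then xbar t else x t) /\
          alpha t.+1 =
            (if f (xbar t) < f (x t) then
               (if dotp (grad (x t)) (x t - v t) >= dotp (grad (x t)) (s t - x t)
                then (fun w => (1 - gamma t) * alpha t w
                               + gamma t * (if w == v t then 1 else 0))
                else (fun w => (1 + gamma t) * alpha t w
                               - gamma t * (if w == s t then 1 else 0)))
             else alpha t).

Definition Gset (gmax : nat -> \bar R) (gamma : nat -> R) (t : nat) : Prop :=
  (1%E <= gmax t)%E \/ ((gamma t)%:E < gmax t)%E.

Definition Iset (eta : R) (Lt : nat -> R) (t : nat) : Prop :=
  Lt t.+1 <= eta * Lt t.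

End Defs.

(* Main.v *)
Require Import Defs.
From HB Require Import structures.
From mathcomp Require Import all_boot all_order all_algebra.
From mathcomp Require Import all_classical all_reals all_analysis.
Import Order.TTheory GRing.Theory Num.Theory.
Import numFieldNormedType.Exports.
Local Open Scope classical_set_scope.
Local Open Scope ring_scope.
From mathcomp Require Import ring lra zify.
Set Implicit Arguments. Unset Strict Implicit. Unset Printing Implicit Defensive.
Section LA.
Variables (R : realType) (n : nat).
Local Notation vec := 'rV[R]_n.
Implicit Types u w z : vec.

Lemma dotpC u w : dotp u w = dotp w u.
Proof. by apply: eq_bigr => i _; rewrite mulrC. Qed.

Lemma dotp_lin a b u w z : dotp (a *: u + b *: w) z = a * dotp u z + b * dotp w z.
Proof.
rewrite /dotp !mulr_sumr -big_split /=; apply: eq_bigr => i _.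
by rewrite !mxE; ring.
Qed.

Lemma dotpDl u w z : dotp (u + w) z = dotp u z + dotp w z.
Proof. by rewrite -[u]scale1r -[w]scale1r dotp_lin !mul1r !scale1r. Qed.
Lemma dotpZl a u z : dotp (a *: u) z = a * dotp u z.
Proof. by rewrite -[_ *: u]addr0 -[0 : vec](scale0r u) dotp_lin mul0r addr0. Qed.
Lemma dotpNl u z : dotp (- u) z = - dotp u z.
Proof. by rewrite -scaleN1r dotpZl mulN1r. Qed.
Lemma dotpBl u w z : dotp (u - w) z = dotp u z - dotp w z.
Proof. by rewrite dotpDl dotpNl. Qed.
Lemma dotpDr u w z : dotp z (u + w) = dotp z u + dotp z w.
Proof. by rewrite dotpC dotpDl !(dotpC z). Qed.
Lemma dotpZr a u z : dotp z (a *: u) = a * dotp z u.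
Proof. by rewrite dotpC dotpZl dotpC. Qed.
Lemma dotpNr u z : dotp z (- u) = - dotp z u.
Proof. by rewrite dotpC dotpNl dotpC. Qed.
Lemma dotpBr u w z : dotp z (u - w) = dotp z u - dotp z w.
Proof. by rewrite dotpDr dotpNr. Qed.
Lemma dotp0l z : dotp 0 z = 0.
Proof. by rewrite -(scale0r (0:vec)) dotpZl mul0r. Qed.
Lemma dotp0r z : dotp z 0 = 0.
Proof. by rewrite dotpC dotp0l. Qed.
Lemma dotp_sumr (I : eqType) (sq : seq I) (F : I -> vec) z :
  dotp z (\sum_(i <- sq) F i) = \sum_(i <- sq) dotp z (F i).
Proof.
elim: sq => [|a sq IH]; first by rewrite !big_nil dotp0r.
by rewrite !big_cons dotpDr IH.
Qed.

Lemma dotpp_ge0 u : 0 <= dotp u u.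
Proof. by apply: sumr_ge0 => i _; rewrite -expr2 sqr_ge0. Qed.

Lemma dotpp_eq0 u : dotp u u = 0 -> u = 0.
Proof.
move=> /eqP; rewrite psumr_eq0; last by move=> i _; rewrite -expr2 sqr_ge0.
move=> /allP H; apply/rowP => i; rewrite mxE.
have := H i (mem_index_enum i); rewrite /= -expr2 sqrf_eq0 => /eqP ->.
by [].
Qed.

Lemma norm2_ge0 u : 0 <= norm2 u.
Proof. exact: sqrtr_ge0. Qed.

Lemma norm2_sq u : norm2 u ^+ 2 = dotp u u.
Proof. by rewrite sqr_sqrtr // dotpp_ge0. Qed.

Lemma norm2_eq0 u : norm2 u = 0 -> u = 0.
Proof. by move=> h; apply: dotpp_eq0; rewrite -norm2_sq h expr0n. Qed.

Lemma norm2_0 : norm2 (0 : vec) = 0.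
Proof. by rewrite /norm2 dotp0l sqrtr0. Qed.

Lemma norm2Z a u : norm2 (a *: u) = `|a| * norm2 u.
Proof.
rewrite /norm2 dotpZl dotpZr mulrA -expr2 sqrtrM ?sqr_ge0 //.
by rewrite sqrtr_sqr.
Qed.

Lemma norm2N u : norm2 (- u) = norm2 u.
Proof. by rewrite -scaleN1r norm2Z normrN normr1 mul1r. Qed.

Lemma norm2B u w : norm2 (u - w) = norm2 (w - u).
Proof. by rewrite -norm2N opprB. Qed.

Lemma CS u w : dotp u w <= norm2 u * norm2 w.
Proof.
set a := norm2 u; set b := norm2 w.
have [a0|a0] := eqVneq a 0.
  by rewrite (norm2_eq0 a0) dotp0l a0 mul0r.
have [b0|b0] := eqVneq b 0.
  by rewrite (norm2_eq0 b0) dotp0r b0 mulr0.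
have ha : 0 < a by rewrite lt_def a0 norm2_ge0.
have hb : 0 < b by rewrite lt_def b0 norm2_ge0.
have := dotpp_ge0 (b *: u - a *: w).
rewrite dotpBl !dotpBr !dotpZl !dotpZr -!norm2_sq -/a -/b (dotpC w u).
move=> H.
have hab : 0 < a * b by rewrite mulr_gt0.
rewrite -(ler_pM2l hab).
nra.
Qed.

Lemma CSabs u w : `|dotp u w| <= norm2 u * norm2 w.
Proof.
rewrite ler_norml CS andbT lerNl -dotpNl.
by rewrite -(norm2N u) CS.
Qed.

Lemma norm2D u w : norm2 (u + w) <= norm2 u + norm2 w.
Proof.
rewrite -(ler_pXn2r (_ : 0 < 2)%N) ?nnegrE ?addr_ge0 ?norm2_ge0 //.
rewrite norm2_sq dotpDl !dotpDr (dotpC w u) sqrrD !norm2_sq.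
have := CS u w; lra.
Qed.

Lemma norm2_sum (I : eqType) (sq : seq I) (F : I -> vec) :
  norm2 (\sum_(i <- sq) F i) <= \sum_(i <- sq) norm2 (F i).
Proof.
elim: sq => [|a sq IH]; first by rewrite !big_nil norm2_0.
rewrite !big_cons; apply: le_trans (norm2D _ _) _; exact: lerD.
Qed.

End LA.
Section Desc.
Variables (R : realType) (n : nat).
Local Notation vec := 'rV[R]_n.
Lemma line_deriv (f : vec -> R) grad (x h : vec) (t : R) :
  is_gradient f grad ->
  is_derive t 1 (fun u : R => f (x + u *: h)) (dotp (grad (x + t *: h)) h).
Proof.
move=> /(_ (x + t *: h)) [df dg].
have E : (fun k : R => k^-1 *: (((fun u : R => f (x + u *: h)) \o shift t) (k *: 1) - f (x + t *: h)))
   = (fun k : R => k^-1 *: ((f \o shift (x + t *: h)) (k *: h) - f (x + t *: h))).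
  apply/funext => k /=; congr (_ *: (f _ - _)).
  by rewrite /shift scalerDl -[k%:A]/(k * 1) mulr1 addrCA addrA.
have dv : derivable f (x + t *: h) h by exact: diff_derivable.
split.
  by rewrite /derivable E.
by rewrite /derive E -/(derive f _ h) deriveE // dg.
Qed.

Lemma mvt_le0 (phi dphi : R -> R) :
  (forall t : R, is_derive t (1:R) phi (dphi t)) ->
  (forall t : R, 0 < t < 1 -> dphi t <= 0) -> phi 1 <= phi 0.
Proof.
move=> D H.
have cont : {within `[0, 1], continuous phi}.
  by apply: derivable_within_continuous => z _; exact: (D z).(ex_derive).
have [c c01 E] := @MVT R phi dphi 0 1 ltr01 (fun z _ => D z) cont.
rewrite -subr_le0 E subr0 mulr1; apply: H.
by move: c01; rewrite in_itv.
Qed.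

Lemma descent (f : vec -> R) grad L :
  is_gradient f grad ->
  (forall y z, norm2 (grad y - grad z) <= L * norm2 (y - z)) ->
  forall x y, `|f y - f x - dotp (grad x) (y - x)| <= L / 2 * norm2 (y - x) ^+ 2.
Proof.
move=> hg hL x y; set h := y - x; set k := dotp (grad x) h; set c := norm2 h ^+ 2.
have key t : 0 < t -> `|dotp (grad (x + t *: h)) h - k| <= L * t * c.
  move=> t0; rewrite /k -dotpBl.
  apply: le_trans (CSabs _ _) _.
  apply: le_trans (ler_wpM2r (norm2_ge0 _) (hL _ _)) _.
  by rewrite addrC addKr norm2Z gtr0_norm // /c expr2 !mulrA.
have gen (sg : R) : (forall t, 0 < t < 1 -> sg * (dotp (grad (x + t *: h)) h - k) - L * t * c <= 0) ->
    sg * (f y - f x - k) - L / 2 * c <= 0.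
  move=> Hs.
  pose phi := (sg \*: ((fun u => f (x + u *: h)) - (k \*: (@idfun R))))
               - ((L / 2 * c) \*: ((@idfun R) * (@idfun R))).
  have D (t : R) : is_derive t (1:R) phi (sg *: (dotp (grad (x + t *: h)) h - k *: 1)
                 - (L / 2 * c) *: (t *: 1 + t *: 1)).
    apply: is_deriveB.
    exact: (is_deriveZ sg (is_deriveB (line_deriv x h t hg) (is_deriveZ k (is_derive_id t 1)))).
  have E u : phi u = sg * (f (x + u *: h) - k * u) - L / 2 * c * (u * u) by [].
  have sc (a b : R) : a *: b = a * b by [].
  have := mvt_le0 D _; rewrite !E !mulr0 !subr0 !mulr1 scale1r (_ : x + h = y); last by rewrite /h addrC subrK.
  move=> H.
  suff H1 : sg * (f y - k) - L / 2 * c <= sg * f x by lra.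
  rewrite -[X in _ <= sg * f X](addr0 x) -[0 : vec](scale0r h).
  apply: H => t /andP [t0 t1]; rewrite !sc !mulr1.
  have := Hs t; rewrite t0 t1 => /(_ isT); lra.
rewrite ler_norml; apply/andP; split.
  have := gen (-1); rewrite mulN1r => H.
  suff : - (f y - f x - k) - L / 2 * c <= 0 by rewrite -/h -/k; lra.
  apply: H => t /andP [t0 _]; have := key t t0; rewrite ler_norml => /andP [? ?].
  rewrite mulN1r; lra.
have := gen 1; rewrite mul1r => H.
suff : (f y - f x - k) - L / 2 * c <= 0 by rewrite -/h -/k; lra.
apply: H => t /andP [t0 _]; have := key t t0; rewrite ler_norml => /andP [? ?].
rewrite mul1r; lra.
Qed.

Lemma grad_ineq (f : vec -> R) grad : convex_fun f -> is_gradient f grad ->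
  forall x y, f x + dotp (grad x) (y - x) <= f y.
Proof.
move=> cf hg x y; set h := y - x; set g := dotp (grad x) h.
have D := line_deriv x h 0 hg; rewrite scale0r addr0 in D.
case: D => cv E; rewrite /derive in E; rewrite /derivable E in cv.
have qle k : 0 < k <= 1 ->
    k^-1 *: (((fun u : R => f (x + u *: h)) \o shift 0) (k *: 1) - f (x + 0 *: h)) <= f y - f x.
  move=> /andP [k0 k1].
  rewrite /= /shift addr0 scale0r addr0 -[k *: 1]/(k * 1) mulr1.
  have -> : x + k *: h = k *: y + (1 - k) *: x.
    by rewrite /h scalerBr scalerBl scale1r addrCA addrA.
  have := cf y x k; rewrite k1 ltW //= => /(_ isT) H.
  rewrite -[_ *: _]/(_ * _) ler_pdivrMl //; lra.
rewrite leNgt; apply/negP => Hlt.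
have Hg : f y - f x < g by rewrite -/g in Hlt; lra.
have := @cvgr_gt R R 0^' _ _ _ cv _ Hg.
rewrite nearE /= => /(_ (@filter_filter _ _ (Proper_dnbhs_numFieldType (0:R)))).
rewrite /dnbhs /within /= => /nbhs_ballP [e /= e0 He].
pose k := Num.min (e / 2) 1.
have k0 : 0 < k by rewrite lt_min ltr01 andbT divr_gt0.
have k1 : k <= 1 by rewrite ge_min lexx orbT.
have kb : ball 0 e k.
  rewrite /ball /= sub0r normrN gtr0_norm //.
  apply: (@le_lt_trans _ _ (e / 2)); first by rewrite ge_min lexx.
  lra.
have := He k kb (lt0r_neq0 k0).
by rewrite ltNge qle // k0.
Qed.
End Desc.

Section Geo.
Variables (R : realType) (n : nat).
Local Notation vec := 'rV[R]_n.

Lemma le_bigmaxr (I : finType) (F : I -> R) i : F i <= \big[Num.max/0]_j F j.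
Proof. by rewrite (bigD1 i) //= le_max lexx. Qed.

Lemma coord_le (u : vec) i : `|u 0 i| <= `|u|.
Proof.
have -> : `|u| = mx_norm u by [].
by rewrite mx_normrE; apply: (le_bigmaxr (fun ij : 'I_1 * 'I_n => `|u ij.1 ij.2|) (0, i)).
Qed.

Lemma norm2_le_mx (u : vec) : norm2 u <= Num.sqrt (n%:R * `|u| ^+ 2).
Proof.
apply: ler_wsqrtr; rewrite /dotp.
apply: le_trans (_ : \sum_(i < n) `|u| ^+ 2 <= _); last first.
  by rewrite sumr_const card_ord mulr_natl.
apply: ler_sum => i _; rewrite -expr2 -real_normK ?num_real //.
by rewrite lerXn2r ?nnegrE ?normr_ge0 ?coord_le.
Qed.

Lemma diam_ub (A : set vec) : compact A -> has_ubound [set norm2 (x - y) | x in A & y in A].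
Proof.
move=> cA; have [M [_ HM]] := compact_bounded cA.
have HB := HM (M + 1) (eq_ind_r is_true ltr01 (ltrDl M 1) : M < M + 1).
exists (Num.sqrt (n%:R * (2 * (M + 1)) ^+ 2)) => _ [p Ap [q Aq <-]].
have hpq : `|p - q| <= 2 * (M + 1).
  apply: le_trans (ler_normB p q) _; rewrite mulr2n mulrDl mul1r.
  by apply: lerD; [exact: HB|exact: HB].
apply: le_trans (norm2_le_mx _) _; apply: ler_wsqrtr.
rewrite ler_wpM2l // lerXn2r // nnegrE //.
exact: le_trans (normr_ge0 _) hpq.
Qed.

Lemma diam_le (A : set vec) p q : compact A -> A p -> A q -> norm2 (p - q) <= diam A.
Proof.
move=> cA Ap Aq; apply: (ub_le_sup (diam_ub cA)).
by exists p => //; exists q.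
Qed.

Lemma conv_seq (A : set vec) (sq : seq vec) (b : vec -> R) :
  (forall w, w \in sq -> A w) -> (forall w, w \in sq -> 0 <= b w) ->
  \sum_(w <- sq) b w = 1 -> convhull A (\sum_(w <- sq) b w *: w).
Proof.
move=> hA hb h1.
exists (size sq), (fun i => nth 0 sq i), (fun i => b (nth 0 sq i)).
split; first by move=> i; apply: hA; apply: mem_nth.
split; first by move=> i; apply: hb; apply: mem_nth.
split; first by rewrite -h1 (big_nth 0) big_mkord.
by rewrite (big_nth 0) big_mkord.
Qed.

Lemma lin_min (A : set vec) g c y : (forall w, A w -> c <= dotp g w) ->
  convhull A y -> c <= dotp g y.
Proof.
move=> H [k [p [w [Ap [w0 [w1 ->]]]]]].
rewrite dotp_sumr.
apply: le_trans (_ : \sum_(i < k) w i * c <= _).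
  by rewrite -mulr_suml w1 mul1r.
apply: ler_sum => i _; rewrite dotpZr ler_wpM2l //; exact: H.
Qed.

Lemma conv_norm_le (A : set vec) (sq : seq vec) (b : vec -> R) p :
  compact A -> A p ->
  (forall w, w \in sq -> A w) -> (forall w, w \in sq -> 0 <= b w) ->
  \sum_(w <- sq) b w = 1 -> norm2 (\sum_(w <- sq) b w *: w - p) <= diam A.
Proof.
move=> cA Ap hA hb h1.
have -> : \sum_(w <- sq) b w *: w - p = \sum_(w <- sq) b w *: (w - p).
  rewrite -[p in _ - p]scale1r -h1 scaler_suml -sumrB.
  by apply: eq_bigr => w _; rewrite scalerBr.
apply: le_trans (norm2_sum _ _) _.
apply: le_trans (_ : \sum_(w <- sq) b w * diam A <= _); last first.
  by rewrite -mulr_suml h1 mul1r.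
rewrite big_seq_cond [X in _ <= X]big_seq_cond; apply: ler_sum => w /andP [ws _].
rewrite norm2Z ger0_norm ?hb //; apply: ler_wpM2l; first exact: hb.
by apply: diam_le => //; apply: hA.
Qed.

End Geo.
Section SeqL.
Variables (R : realType) (n : nat).
Local Notation vec := 'rV[R]_n.

Lemma sum_delta (V : nmodType) (l : seq vec) u (F : vec -> V) :
  uniq l -> u \in l -> \sum_(w <- l) (if w == u then F w else 0) = F u.
Proof.
elim: l => //= a l IH /andP [anl ul]; rewrite in_cons big_cons.
case: (eqVneq a u) => [<-|ne] /=.
  move=> _; rewrite big1_seq ?addr0 // => w /andP [_ wl].
  by case: eqP => // wa; rewrite -wa wl in anl.
by rewrite add0r; apply: IH.
Qed.

Lemma comb_sum (l : seq vec) (a : vec -> R) (c1 c2 : R) u : uniq l -> u \in l ->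
  \sum_(w <- l) (c1 * a w + c2 * (if w == u then 1 else 0)) = c1 * \sum_(w <- l) a w + c2.
Proof.
move=> ul ul'; rewrite big_split /= -mulr_sumr; congr (_ + _).
transitivity (\sum_(w <- l) (if w == u then c2 else 0)).
  by apply: eq_bigr => w _; case: eqP; rewrite ?mulr1 ?mulr0.
exact: (sum_delta (fun _ => c2) ul ul').
Qed.

Lemma comb_vec (l : seq vec) (a : vec -> R) (c1 c2 : R) u : uniq l -> u \in l ->
  \sum_(w <- l) (c1 * a w + c2 * (if w == u then 1 else 0)) *: w
   = c1 *: \sum_(w <- l) a w *: w + c2 *: u.
Proof.
move=> ul ul'; under eq_bigr do rewrite scalerDl.
rewrite big_split /= scaler_sumr; congr (_ + _).
  by apply: eq_bigr => w _; rewrite scalerA.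
transitivity (\sum_(w <- l) (if w == u then c2 *: w else 0)).
  by apply: eq_bigr => w _; case: eqP; rewrite ?mulr1 ?mulr0 ?scale0r.
exact: (sum_delta (fun w => c2 *: w) ul ul').
Qed.

End SeqL.

Section Alg.
Variables (R : realType) (n : nat).
Local Notation vec := 'rV[R]_n.
Variables (A : set vec) (f : vec -> R) (grad : vec -> vec) (rr : nat -> R)
  (xm1 : vec) (x v s d xbar : nat -> vec) (gmax : nat -> \bar R)
  (gamma Lt : nat -> R) (alpha : nat -> vec -> R).
Hypothesis run : AC_AFW_run A f grad rr xm1 x v s d xbar gmax gamma Lt alpha.
Hypothesis rr01 : forall t, 0 < rr t <= 1.
Hypothesis Lt0 : 0 < Lt 0%N.

Definition FWc t : bool := dotp (grad (x t)) (s t - x t) <= dotp (grad (x t)) (x t - v t).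
Definition acc t : bool := f (xbar t) < f (x t).

Fixpoint sq t : seq vec := match t with
  | 0%N => [:: x 0%N]
  | t'.+1 => if v t' \in sq t' then sq t' else v t' :: sq t' end.

Definition beta t (g : R) (w : vec) : R :=
  if FWc t then (1 - g) * alpha t w + g * (if w == v t then 1 else 0)
  else (1 + g) * alpha t w - g * (if w == s t then 1 else 0).

Definition Inv t := (forall w, w \in sq t -> A w) /\
  (forall w, w \notin sq t -> alpha t w = 0) /\ (forall w, 0 <= alpha t w) /\
  \sum_(w <- sq t) alpha t w = 1 /\ x t = \sum_(w <- sq t) alpha t w *: w.

Lemma run_v t : A (v t) /\ forall w, A w -> dotp (grad (x t)) (v t) <= dotp (grad (x t)) w.
Proof. by case: run => _ [_ [_ [_ /(_ t) [H _]]]]. Qed.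
Lemma run_s t : 0 < alpha t (s t) /\
  (forall w, 0 < alpha t w -> dotp (grad (x t)) w <= dotp (grad (x t)) (s t)).
Proof. by case: run => _ [_ [_ [_ /(_ t) [_ [H _]]]]]. Qed.
Lemma run_d t : if FWc t then d t = x t - v t /\ gmax t = 1%E
           else d t = s t - x t /\ gmax t = away_gmax (alpha t (s t)).
Proof. by case: run => _ [_ [_ [_ /(_ t) [_ [_ [H _]]]]]]. Qed.
Lemma run_gamma t : (gamma t)%:E = Order.min
   ((dotp (grad (x t)) (d t) / (Lt t * (norm2 (d t)) ^+ 2))%:E) (gmax t).
Proof. by case: run => _ [_ [_ [_ /(_ t) [_ [_ [_ [H _]]]]]]]. Qed.
Lemma run_xbar t : xbar t = x t - gamma t *: d t.
Proof. by case: run => _ [_ [_ [_ /(_ t) [_ [_ [_ [_ [H _]]]]]]]]. Qed.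
Lemma run_Lt t : Lt t.+1 = Num.max (ell f grad (x t) (xbar t)) (rr t * Lt t).
Proof. by case: run => _ [_ [_ [_ /(_ t) [_ [_ [_ [_ [_ [H _]]]]]]]]]. Qed.
Lemma run_x t : x t.+1 = if acc t then xbar t else x t.
Proof. by case: run => _ [_ [_ [_ /(_ t) [_ [_ [_ [_ [_ [_ [H _]]]]]]]]]]. Qed.
Lemma run_alpha t : alpha t.+1 = if acc t then beta t (gamma t) else alpha t.
Proof.
case: run => _ [_ [_ [_ /(_ t) [_ [_ [_ [_ [_ [_ [_ H]]]]]]]]]].
rewrite H /acc /beta /FWc; case: ifP => // _; apply/funext => w; by case: ifP.
Qed.

Lemma Lt_pos t : 0 < Lt t.
Proof.
elim: t => // t IH; rewrite run_Lt lt_max; apply/orP; right.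
by apply: mulr_gt0 => //; case/andP: (rr01 t).
Qed.

Lemma sq_uniq t : uniq (sq t).
Proof. by elim: t => //= t IH; case: ifP => //= ->. Qed.

Lemma sq_sub t w : w \in sq t -> w \in sq t.+1.
Proof. by rewrite /=; case: ifP => // _ H; rewrite in_cons H orbT. Qed.

Lemma v_in t : v t \in sq t.+1.
Proof. by rewrite /=; case: ifP => // _; rewrite in_cons eqxx. Qed.

Lemma sq_S t w : w \in sq t.+1 -> w = v t \/ w \in sq t.
Proof.
rewrite /=; case: ifP => _; first by right.
by rewrite in_cons => /orP [/eqP ->|]; [left|right].
Qed.

Lemma sum_ext (V : nmodType) t (F : vec -> V) : (v t \notin sq t -> F (v t) = 0) ->
  \sum_(w <- sq t.+1) F w = \sum_(w <- sq t) F w.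
Proof. by rewrite /=; case: ifP => // _ /(_ isT) h; rewrite big_cons h add0r. Qed.

Lemma Inv0 : Inv 0.
Proof.
case: run => _ [[hx0 _] [_ [ha0 _]]].
split; [|split; [|split; [|split]]] => //=.
- by move=> w; rewrite inE => /eqP ->.
- by move=> w; rewrite inE ha0 => /negbTE ->.
- by move=> w; rewrite ha0; case: ifP.
- by rewrite big_seq1 ha0 eqxx.
- by rewrite big_seq1 ha0 eqxx scale1r.
Qed.


Lemma s_in t : Inv t -> s t \in sq t.
Proof.
move=> [_ [H _]]; apply/negPn/negP => /H h.
by have := (run_s t).1; rewrite h ltxx.
Qed.

Lemma alpha_le1 t w : Inv t -> alpha t w <= 1.
Proof.
move=> [_ [H0 [Hp [H1 _]]]].
have [ws|wn] := boolP (w \in sq t); last by rewrite H0.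
rewrite -H1 (big_rem w) //= lerDl; apply: sumr_ge0 => u _; exact: Hp.
Qed.

Lemma x_conv t : Inv t -> convhull A (x t).
Proof.
move=> [HA [_ [Hp [H1 Hx]]]]; rewrite Hx; apply: conv_seq => // w _; exact: Hp.
Qed.

Lemma gd_ge0 t : Inv t -> 0 <= dotp (grad (x t)) (d t).
Proof.
move=> I; have hv : dotp (grad (x t)) (v t) <= dotp (grad (x t)) (x t).
  by apply: lin_min (x_conv I); exact: (run_v t).2.
have := run_d t; rewrite /FWc; case: ifP => H [-> _].
  by rewrite dotpBr subr_ge0.
move/negbT: H; rewrite -ltNge => H.
apply: le_trans (ltW H); by rewrite dotpBr subr_ge0.
Qed.

Lemma gmax_pos t : Inv t -> (0 < gmax t)%E.
Proof.
move=> I; have := run_d t; case: ifP => _ [_ ->] //.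
rewrite /away_gmax; case: ifP => // /negbT a1.
have a0 := (run_s t).1; have a1' := alpha_le1 (s t) I.
have a1'' : alpha t (s t) < 1 by rewrite lt_def eq_sym a1 a1'.
by rewrite lte_fin divr_gt0 // subr_gt0.
Qed.

Lemma gamma_props t : Inv t -> [/\ 0 <= gamma t, ((gamma t)%:E <= gmax t)%E &
   gamma t <= dotp (grad (x t)) (d t) / (Lt t * (norm2 (d t)) ^+ 2)].
Proof.
move=> I; have E := run_gamma t.
have a0 : 0 <= dotp (grad (x t)) (d t) / (Lt t * (norm2 (d t)) ^+ 2).
  by rewrite divr_ge0 ?gd_ge0 // mulr_ge0 ?sqr_ge0 // ltW // Lt_pos.
split.
- by rewrite -lee_fin E le_min lee_fin a0 ltW // gmax_pos.
- by rewrite E ge_min lexx orbT.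
- by rewrite -lee_fin E ge_min lexx.
Qed.


Lemma beta_ok t g : Inv t -> 0 <= g -> (g%:E <= gmax t)%E ->
  (forall w, 0 <= beta t g w) /\ (forall w, w \notin sq t.+1 -> beta t g w = 0) /\
  \sum_(w <- sq t.+1) beta t g w = 1 /\ \sum_(w <- sq t.+1) beta t g w *: w = x t - g *: d t.
Proof.
move=> I g0 gm; have I' := I; case: I' => [HA [H0 [Hp [H1 Hx]]]].
have S1 : \sum_(w <- sq t.+1) alpha t w = 1 by rewrite sum_ext // => /H0.
have Sx : \sum_(w <- sq t.+1) alpha t w *: w = x t.
  by rewrite Hx sum_ext // => /H0 ->; rewrite scale0r.
have ssq := sq_sub (s_in I).
have := run_d t; rewrite /beta; case: ifP => FW [hd hg].
  rewrite hg lee_fin in gm.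
  split; first by move=> w; rewrite addr_ge0 ?mulr_ge0 ?subr_ge0 //; case: ifP.
  split.
    move=> w wn; have wv : (w == v t) = false.
      by apply/negbTE; apply: contraNneq wn => ->; exact: v_in.
    rewrite wv mulr0 addr0 H0 ?mulr0 //; apply: contraNN wn; exact: sq_sub.
  split; first by rewrite comb_sum ?sq_uniq ?v_in // S1 mulr1 subrK.
  by rewrite comb_vec ?sq_uniq ?v_in // Sx hd scalerBr scalerBl scale1r opprB addrA [LHS]addrAC.
have a0 := (run_s t).1; have a1 := alpha_le1 (s t) I.
have Hsum w : (1 + g) * alpha t w - g * (if w == s t then 1 else 0)
    = (1 + g) * alpha t w + (- g) * (if w == s t then 1 else 0) by rewrite mulNr.
split.
  move=> w; case: (eqVneq w (s t)) => [->|ne]; last first.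
    by rewrite mulr0 subr0 mulr_ge0 ?addr_ge0.
  rewrite mulr1; move: gm; rewrite hg /away_gmax.
  case: (eqVneq (alpha t (s t)) 1) => [->|ne1]; first by rewrite mulr1 addrK.
  rewrite lee_fin => gm.
  have a1' : 0 < 1 - alpha t (s t) by rewrite subr_gt0 lt_def eq_sym ne1 a1.
  rewrite ler_pdivlMr // in gm.
  rewrite subr_ge0; nra.
split.
  move=> w wn; have wv : (w == s t) = false.
    by apply/negbTE; apply: contraNneq wn => ->.
  rewrite wv mulr0 subr0 H0 ?mulr0 //; apply: contraNN wn; exact: sq_sub.
split.
  under eq_bigr do rewrite Hsum.
  by rewrite comb_sum ?sq_uniq // S1 mulr1 addrK.
under eq_bigr do rewrite Hsum.
rewrite comb_vec ?sq_uniq // Sx hd scalerBr scalerDl scale1r scaleNr.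
by rewrite opprB addrA.
Qed.

Lemma Inv_step t : Inv t -> Inv t.+1.
Proof.
move=> I; have I' := I; case: I' => [HA [H0 [Hp [H1 Hx]]]].
have [g0 gm _] := gamma_props I.
have [B0 [Bout [B1 Bx]]] := beta_ok I g0 gm.
have HA' : forall w, w \in sq t.+1 -> A w.
  by move=> w /sq_S [->|]; [exact: (run_v t).1|exact: HA].
rewrite /Inv run_alpha run_x run_xbar; case: ifP => _.
  by do 4!split => //.
split => //; split.
  by move=> w wn; apply: H0; apply: contraNN wn; exact: sq_sub.
split => //; split.
  by rewrite sum_ext // => /H0.
by rewrite Hx sum_ext // => /H0 ->; rewrite scale0r.
Qed.

Lemma Inv_all t : Inv t.
Proof. elim: t => [|t IH]; [exact: Inv0 | exact: Inv_step]. Qed.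


Definition Ncnt t : nat := (\sum_(w <- sq t) nat_of_bool (0 < alpha t w)%R)%N.
Definition drop t : bool := ~~ FWc t && acc t && ~~ `[< Gset gmax gamma t >].

Lemma sum_eqv_nat (l : seq vec) u : uniq l -> u \in l ->
  (\sum_(w <- l) ((w == u) : nat))%N = 1%N.
Proof.
move=> ul ul'; transitivity (\sum_(w <- l) (if w == u then 1%N else 0%N))%N.
  by apply: eq_bigr => w _; case: eqP.
exact: (sum_delta (fun _ => 1%N) ul ul').
Qed.

Lemma nonG t : ~ Gset gmax gamma t ->
  [/\ FWc t = false, d t = s t - x t, alpha t (s t) < 1,
      gamma t = alpha t (s t) / (1 - alpha t (s t)) &
      gmax t = (gamma t)%:E].
Proof.
move=> nG; have I := Inv_all t; have [g0 gm _] := gamma_props I.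
have ge : gmax t = (gamma t)%:E.
  move: gm; rewrite le_eqVlt => /orP [/eqP -> //|gl].
  by exfalso; apply: nG; right.
have := run_d t; case: ifP => FW [hd hg].
  by exfalso; apply: nG; left; rewrite hg.
move: hg; rewrite /away_gmax; case: (eqVneq (alpha t (s t)) 1) => [_ hg|ne1 hg].
  by exfalso; apply: nG; left; rewrite hg leey.
have a1 : alpha t (s t) < 1 by rewrite lt_def eq_sym ne1 alpha_le1.
split => //.
by move: ge; rewrite hg => -[<-].
Qed.

Lemma Ncnt_pos t : (0 < Ncnt t)%N.
Proof.
have [_ [H0 [Hp [H1 _]]]] := Inv_all t.
rewrite lt0n; apply/negP; rewrite sum_nat_seq_eq0 => /allP H.
have : \sum_(w <- sq t) alpha t w = 0.
  rewrite big_seq; apply: big1 => w ws; have := H w ws; rewrite /= eqb0 -leNgt => h.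
  by apply/eqP; rewrite eq_le h Hp.
by rewrite H1 => /eqP; rewrite oner_eq0.
Qed.

Lemma Ncnt_step t : (Ncnt t.+1 + drop t <= Ncnt t + FWc t)%N.
Proof.
have I := Inv_all t; have [_ [H0 [Hp _]]] := I.
have [g0 gm _] := gamma_props I.
have Ne : Ncnt t = (\sum_(w <- sq t.+1) nat_of_bool (0 < alpha t w)%R)%N.
  by rewrite /Ncnt sum_ext // => /H0 ->; rewrite ltxx.
rewrite /Ncnt run_alpha -/(Ncnt t) Ne /drop.
case: ifP => ac; last by rewrite andbF addn0 leq_addr.
rewrite andbT /beta; case FW: (FWc t) => /=.
  rewrite addn0 addn1.
  apply: (@leq_trans (\sum_(w <- sq t.+1) (nat_of_bool (0 < alpha t w)%R + (w == v t)))%N).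
    apply: leq_sum => w _; case: eqP => [_|_]; first exact: leq_trans (leq_b1 _) (leq_addl _ _).
    have g1 : gamma t <= 1.
      by have := run_d t; rewrite FW => -[_ hg]; move: gm; rewrite hg lee_fin.
    rewrite mulr0 addr0 addn0; case: (boolP (0 < alpha t w)) => a0; first exact: leq_b1.
    by rewrite ltNge mulr_ge0_le0 // ?subr_ge0 // leNgt.
  by rewrite big_split sum_eqv_nat ?sq_uniq ?v_in // -[X in (X <= _)%N]/(_ + 1)%N addn1.
have ssq := sq_sub (s_in I).
case: (asboolP (Gset gmax gamma t)) => G /=.
  rewrite addn0 addn0; apply: leq_sum => w _.
  case: eqP => [->|_]; first by rewrite (run_s t).1; case: (_ < _).
  rewrite mulr0 subr0; case: (ltP 0 ((1 + gamma t) * alpha t w)) => //= h.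
  have gp : 0 < 1 + gamma t by lra.
  by move: h; rewrite pmulr_rgt0 // => ->.
have [_ _ a1 hg _] := nonG G.
have gp : 0 < 1 + gamma t by lra.
rewrite addn0.
apply: (@leq_trans (\sum_(w <- sq t.+1) (nat_of_bool (0 < (1 + gamma t) * alpha t w - gamma t * (if w == s t then 1 else 0))%R + (w == s t)))%N).
  by rewrite big_split sum_eqv_nat ?sq_uniq.
apply: leq_sum => w _.
case: eqP => [->|_].
  have -> : (1 + gamma t) * alpha t (s t) - gamma t * 1 = 0.
    by rewrite hg; field; rewrite subr_eq0 eq_sym lt_eqF.
  by rewrite ltxx (run_s t).1.
by rewrite mulr0 subr0 addn0 pmulr_rgt0.
Qed.


Lemma ell_le L : is_gradient f grad ->
  (forall y z, norm2 (grad y - grad z) <= L * norm2 (y - z)) ->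
  forall y z, y != z -> ell f grad y z <= L.
Proof.
move=> hg hL y z ne; rewrite /ell (negbTE ne).
have m0 : 0 < norm2 (z - y).
  rewrite lt_def norm2_ge0 andbT; apply/eqP => /norm2_eq0 /eqP.
  by rewrite subr_eq0 eq_sym (negbTE ne).
rewrite ler_pdivrMr ?exprn_gt0 //.
have := descent hg hL y z; lra.
Qed.

Lemma nonG_rej eta t : eta < 2 -> ~ Gset gmax gamma t -> ~~ acc t -> ~ Iset eta Lt t.
Proof.
move=> e2 nG nacc; rewrite /Iset; apply/negP; rewrite -ltNge.
have I := Inv_all t; have [g0 gm gle] := gamma_props I.
have [FW0 hd a1 hg gmE] := nonG nG.
have a0 := (run_s t).1.
have gp : 0 < gamma t by rewrite hg divr_gt0 // subr_gt0.
set gd := dotp (grad (x t)) (d t) in gle *.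
have dn0 : d t != 0.
  apply/eqP => d0; move: gle; rewrite /gd d0 dotp0r mul0r.
  by rewrite leNgt gp.
have nd : 0 < norm2 (d t).
  by rewrite lt_def norm2_ge0 andbT; apply/eqP => /norm2_eq0 /eqP; rewrite (negbTE dn0).
have Lp := Lt_pos t.
have gdl : gamma t * (Lt t * norm2 (d t) ^+ 2) <= gd.
  by rewrite -ler_pdivlMr // mulr_gt0 // exprn_gt0.
have fle : f (x t) <= f (xbar t) by rewrite leNgt.
have xne : x t != xbar t.
  rewrite run_xbar; apply/eqP => /eqP; rewrite -subr_eq0 opprB addrC subrK scaler_eq0.
  by rewrite (negbTE dn0) orbF gt_eqF.
have Eb : xbar t - x t = - (gamma t *: d t) by rewrite run_xbar addrC addKr.
have ell2 : 2 * Lt t <= ell f grad (x t) (xbar t).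
  rewrite /ell (negbTE xne) Eb dotpNr dotpZr -/gd norm2N norm2Z gtr0_norm //.
  rewrite ler_pdivlMr ?exprn_gt0 ?mulr_gt0 //.
  apply: le_trans (_ : 2 * (f (xbar t) - f (x t) + gamma t * gd) <= _); last first.
    by rewrite ler_pM2l // opprK ?ler_norm.
  have : gamma t * (gamma t * (Lt t * norm2 (d t) ^+ 2)) <= gamma t * gd.
    by rewrite ler_pM2l.
  rewrite exprMn gtr0_norm // => H; nra.
  by rewrite normr_gt0 gt_eqF.
  rewrite opprK.
  have H2 : gamma t * (gamma t * (Lt t * norm2 (d t) ^+ 2)) <= gamma t * gd by rewrite ler_pM2l.
  have H3 : 0 < gamma t * (gamma t * (Lt t * norm2 (d t) ^+ 2)) by rewrite !mulr_gt0 // exprn_gt0.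
  lra.
rewrite run_Lt; apply: (@lt_le_trans _ _ (ell f grad (x t) (xbar t))); last by rewrite le_max lexx.
apply: lt_le_trans ell2; rewrite ltr_pM2r //.
Qed.

Lemma Lt_le L : is_gradient f grad ->
  (forall y z, norm2 (grad y - grad z) <= L * norm2 (y - z)) ->
  forall t, Lt t <= L.
Proof.
move=> hg hL.
have L0 : Lt 0%N <= L.
  case: run => _ [_ [hL0 _]]; move: Lt0; rewrite hL0.
  case: (eqVneq xm1 (x 0%N)) => [->|ne _]; first by rewrite /ell eqxx ltxx.
  exact: ell_le.
have Lp : 0 < L by apply: lt_le_trans L0.
elim => // t IH; rewrite run_Lt ge_max; apply/andP; split.
  rewrite /ell; case: ifP => [_|/negbT ne]; first exact: ltW.
  by have := ell_le hg hL ne; rewrite /ell (negbTE ne).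
apply: le_trans IH; case/andP: (rr01 t) => r0 r1.
by rewrite ler_piMl // ltW // Lt_pos.
Qed.

Lemma Lt_lower eta : 1 <= eta -> forall T,
  eta ^+ (\sum_(k < T) (~~ `[< Iset eta Lt k >] : nat))%N * (\prod_(k < T) rr k) * Lt 0%N <= Lt T.
Proof.
move=> e1; elim => [|T IH]; first by rewrite big_ord0 big_ord0 expr0 !mul1r.
rewrite big_ord_recr big_ord_recr /=.
set m := (\sum_(k < T) _)%N; set P := \prod_(k < T) rr k.
have -> : eta ^+ (m + ~~ `[< Iset eta Lt T >])%N * (P * rr T) * Lt 0%N
   = eta ^+ (~~ `[< Iset eta Lt T >]) * rr T * (eta ^+ m * P * Lt 0%N).
  by rewrite exprD; ring.
have [r0 r1] := andP (rr01 T).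
have LT := Lt_pos T.
have h1 : rr T * Lt T <= Lt T.+1 by rewrite run_Lt le_max lexx orbT.
case: (asboolP (Iset eta Lt T)) => HI /=.
  rewrite expr0 mul1r; apply: le_trans h1; by rewrite ler_pM2l.
rewrite expr1.
have h2 : eta * Lt T < Lt T.+1 by rewrite ltNge; apply/negP.
apply: le_trans (ltW h2).
rewrite -mulrA ler_wpM2l //; first by apply: le_trans e1.
apply: le_trans (_ : rr T * Lt T <= _); first by rewrite ler_pM2l.
by rewrite ler_piMl // ltW.
Qed.


Lemma nat_aux (a S b N c F : nat) : (a + b <= N + c)%N -> (N + S <= 1 + F)%N ->
  (a + (S + b) <= 1 + (F + c))%N.
Proof. lia. Qed.

Lemma prod_ge r : (fun t => \prod_(k < t) rr k) @ \oo --> r ->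
  forall T, r <= \prod_(k < T) rr k.
Proof.
move=> hc T.
have dec : {homo (fun t => \prod_(k < t) rr k) : n m / (n <= m)%N >-> m <= n}.
  apply/nonincreasing_seqP => k; rewrite big_ord_recr /=.
  have [r0 r1] := andP (rr01 k).
  rewrite ler_piMr //; apply: prodr_ge0 => i _; exact: ltW (andP (rr01 i)).1.
have := nonincreasing_cvgn_ge dec (cvgP _ hc) T.
by rewrite (cvg_lim _ hc).
Qed.

Lemma count_main (L eta r : R) t : is_gradient f grad ->
  (forall y z, norm2 (grad y - grad z) <= L * norm2 (y - z)) ->
  1 < eta < 2 ->
  (fun t => \prod_(k < t) rr k) @ \oo --> r -> 0 < r <= 1 ->
  ((\sum_(k < t.+1) (`[< Gset gmax gamma k /\ Iset eta Lt k >] : nat))%:R : R)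
     >= (t.+1)%:R / 2 - (Num.floor (ln (L / (r * Lt 0%N)) / ln eta))%:~R.
Proof.
move=> hg hL /andP [e1 e2] hc /andP [r0 r1].
set T := t.+1.
set C := (\sum_(k < T) _)%N.
set D := (\sum_(k < T) (drop k : nat))%N.
set F := (\sum_(k < T) (FWc k : nat))%N.
set M := (\sum_(k < T) (~~ `[< Iset eta Lt k >] : nat))%N.
have hND : forall T', (Ncnt T' + \sum_(k < T') (drop k : nat) <= 1 + \sum_(k < T') (FWc k : nat))%N.
  elim => [|T' IH].
    rewrite !big_ord0 /Ncnt /= big_seq1.
    by case: run => _ [_ [_ [-> _]]]; rewrite eqxx ltr01.
  rewrite !big_ord_recr /=; exact: nat_aux (Ncnt_step T') IH.
have hDF : (D <= F)%N.
  have := hND T; have := Ncnt_pos T; rewrite -/D -/F; lia.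
have hDF2 : (D + F <= T)%N.
  rewrite /D /F -big_split /=.
  apply: leq_trans (_ : (\sum_(k < T) 1 <= T)%N); last by rewrite sum1_card card_ord.
  apply: leq_sum => k _; rewrite /drop; by case: (FWc k); case: (acc k); case: (asbool _).
have hT : (T <= C + D + M)%N.
  rewrite /C /D /M -!big_split /=.
  apply: leq_trans (_ : (\sum_(k < T) 1 >= T)%N) _; first by rewrite sum1_card card_ord.
  apply: leq_sum => k _.
  case: (asboolP (Gset gmax gamma k)) => G.
    case: (asboolP (Iset eta Lt k)) => I.
      by case: (asboolP (_ /\ _)) => //; case.
    by rewrite addn1.
  have [FW0 _ _ _ _] := nonG G.
  case: (boolP (acc k)) => ac.
    rewrite /drop FW0 ac (asboolF G) /=; lia.
  have nI := nonG_rej e2 G ac.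
  by case: (asboolP (Iset eta Lt k)) => // _; rewrite addn1.
have Lp : 0 < Lt 0%N := Lt0.
have hM : M%:R <= ln (L / (r * Lt 0%N)) / ln eta.
  have le1 := Lt_lower (ltW e1) T.
  have le2 := Lt_le hg hL T.
  have pr := prod_ge hc T.
  have ep : 0 < eta ^+ M by rewrite exprn_gt0 // (lt_trans ltr01 e1).
  have h3 : eta ^+ M * r * Lt 0%N <= L.
    apply: le_trans le2; apply: le_trans le1.
    by rewrite ler_pM2r // ler_pM2l.
  have rl : 0 < r * Lt 0%N by rewrite mulr_gt0.
  have h4 : eta ^+ M <= L / (r * Lt 0%N) by rewrite ler_pdivlMr // mulrA.
  have Lq : 0 < L / (r * Lt 0%N) by apply: lt_le_trans h4.
  have := h4; rewrite -ler_ln ?posrE // lnXn ?(lt_trans ltr01 e1) // => h5.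
  by rewrite ler_pdivlMr ?ln_gt0 // mulr_natl.
have hMK : M%:R <= (Num.floor (ln (L / (r * Lt 0%N)) / ln eta))%:~R :> R.
  have : (M%:Z <= Num.floor (ln (L / (r * Lt 0%N)) / ln eta))%R.
    by rewrite floor_ge_int -pmulrn.
  by rewrite -(ler_int R) -pmulrn.
have hC : (T <= C + D + M)%N := hT.
have r1' : (T%:R : R) <= C%:R + D%:R + M%:R by rewrite -!natrD ler_nat.
have r2' : (2 * D%:R : R) <= T%:R.
  have : (D + D <= T)%N by lia.
  rewrite -(ler_nat R) natrD; lra.
lra.
Qed.


Lemma Si (t : nat) : compact A -> norm2 (d t) <= diam A /\
  (forall g : R, 0 <= g -> (g%:E <= gmax t)%E -> convhull A (x t - g *: d t)).
Proof.
move=> cA; have I := Inv_all t; have I' := I; case: I' => [HA [H0 [Hp [H1 Hx]]]].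
split.
  have := run_d t; case: ifP => _ [-> _].
    rewrite Hx; apply: conv_norm_le => //; try exact: (run_v t).1; by move=> w _; exact: Hp.
  rewrite norm2B Hx; apply: conv_norm_le => //; try (by move=> w _; exact: Hp).
  by apply: HA; apply: s_in.
move=> g g0 gm; have [B0 [_ [B1 Bx]]] := beta_ok I g0 gm.
rewrite -Bx; apply: conv_seq => //.
by move=> w /sq_S [->|]; [exact: (run_v t).1|exact: HA].
Qed.

Lemma Siii t : convex_fun f -> is_gradient f grad -> forall xstar, convhull A xstar ->
  f (x t) - f xstar <= dotp (grad (x t)) (d t).
Proof.
move=> cf hg xs hxs; have I := Inv_all t.
have gi := grad_ineq cf hg (x t) xs.
have hv : dotp (grad (x t)) (v t) <= dotp (grad (x t)) xs.
  by apply: lin_min hxs; exact: (run_v t).2.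
have base : f (x t) - f xs <= dotp (grad (x t)) (x t - v t).
  rewrite dotpBr; rewrite dotpBr in gi; lra.
have := run_d t; rewrite /FWc; case: ifP => H [-> _] //.
move/negbT: H; rewrite -ltNge => H; apply: le_trans base (ltW H).
Qed.

Lemma nat_aux1 (S c T N : nat) : (S <= minn T N)%N -> (c <= 1)%N -> (T < N)%N ->
  (S + c <= minn T.+1 N)%N.
Proof. lia. Qed.
Lemma nat_aux2 (S T N : nat) : (S <= minn T N)%N -> (N <= T)%N -> (S + 0 <= minn T.+1 N)%N.
Proof. lia. Qed.

Lemma Sii (L eta r : R) : is_gradient f grad ->
  (forall y z, norm2 (grad y - grad z) <= L * norm2 (y - z)) ->
  1 < eta < 2 ->
  (fun t => \prod_(k < t) rr k) @ \oo --> r -> 0 < r <= 1 ->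
  forall N, exists2 t, (N <= t)%N & Gset gmax gamma t.
Proof.
move=> hg hL he hc hr N.
case: (pselect (exists2 t, (N <= t)%N & Gset gmax gamma t)) => // H; exfalso.
have nG k : (N <= k)%N -> ~ Gset gmax gamma k.
  by move=> Nk Gk; apply: H; exists k.
set K := Num.floor (ln (L / (r * Lt 0%N)) / ln eta).
pose m := `|K|%N.
have Km : (K%:~R : R) <= m%:R by rewrite natr_absz intr_norm ler_norm.
have cs : forall T, (\sum_(k < T) (`[< Gset gmax gamma k /\ Iset eta Lt k >] : nat) <= minn T N)%N.
  elim => [|T IH]; first by rewrite big_ord0.
  rewrite big_ord_recr /=.
  have [TN|NT] := ltnP T N.
    exact: nat_aux1 IH (leq_b1 _) TN.
  rewrite asboolF; last by case=> /(nG _ NT).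
  exact: nat_aux2 IH NT.
have := count_main (2 * (N + m)).+1 hg hL he hc hr.
have := cs (2 * (N + m)).+2; rewrite -/K => hs.
have hs' : (\sum_(k < (2 * (N + m)).+2) (`[< Gset gmax gamma k /\ Iset eta Lt k >] : nat) <= N)%N.
  by apply: leq_trans hs (geq_minr _ _).
rewrite -(ler_nat R) in hs'.
have e : ((2 * (N + m)).+2%:R / 2 : R) = N%:R + m%:R + 1.
  by rewrite -addn2 natrD natrM !natrD; field.
rewrite e; lra.
Qed.

End Alg.

Unset Implicit Arguments.

Theorem lemma8 (R : realType) (n : nat) (A : set 'rV[R]_n)
  (f : 'rV[R]_n -> R) (grad : 'rV[R]_n -> 'rV[R]_n) (L eta r : R)
  (rr : nat -> R) (xm1 : 'rV[R]_n) (x v s d xbar : nat -> 'rV[R]_n)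
  (gmax : nat -> \bar R) (gamma Lt : nat -> R) (alpha : nat -> 'rV[R]_n -> R) :
  compact A ->
  is_gradient f grad ->
  (forall y z, norm2 (grad y - grad z) <= L * norm2 (y - z)) ->
  1 < eta < 2 ->
  (* Condition (D) *)
  (forall t, 0 < rr t <= 1) ->
  (fun t => \prod_(k < t) rr k) @ \oo --> r ->
  0 < r <= 1 ->
  AC_AFW_run A f grad rr xm1 x v s d xbar gmax gamma Lt alpha ->
  0 < Lt 0%N ->
  [/\ (* Condition (S)(i) *)
      (forall t, norm2 (d t) <= diam A /\
         (forall g : R, 0 <= g -> (g%:E <= gmax t)%E -> convhull A (x t - g *: d t))),
      (* Condition (S)(ii) *)
      (forall N, exists2 t, (N <= t)%N & Gset gmax gamma t),
      (* quantitative bound *)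
      (forall t : nat,
         ((\sum_(k < t.+1) (`[< Gset gmax gamma k /\ Iset eta Lt k >] : nat))%:R : R)
         >= (t.+1)%:R / 2 - (Num.floor (ln (L / (r * Lt 0%N)) / ln eta))%:~R) &
      (* Condition (S)(iii) with R = 1, for convex f *)
      (convex_fun f -> forall xstar, convhull A xstar ->
         (forall y, convhull A y -> f xstar <= f y) ->
         forall t, dotp (grad (x t)) (d t) >= f (x t) - f xstar)].
Proof.
Proof.
move=> cA hg hL he hrr hc hr hrun hL0.
split.
- move=> t; exact: (Si hrun hrr hL0 t cA).
- exact: (Sii hrun hrr hL0 hg hL he hc hr).
- move=> t; exact: (count_main hrun hrr hL0 t hg hL he hc hr).
- move=> cf xs hxs _ t; exact: (Siii hrun hrr hL0 t cf hg hxs).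
Qed.
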